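(* Let $k$ be a field, $n\ge0$, and suppose $|k|\ge n+1$. Let $W=\operatorname{span}_k\{(\alpha_1x_1+\cdots+\alpha_mx_m)^n\mid \alpha_1,\ldots,\alpha_m\in k\}\subseteq k\langle x_1,\ldots,x_m\rangle$. Then $W=P_n(x_1,\ldots,x_m)$.
   Context: $k\langle x_1,\ldots,x_m\rangle$ is the free associative unital $k$-algebra. For nonnegative integers $i_1,\ldots,i_m$, $p_{i_1,\ldots,i_m}(x_1,\ldots,x_m)$ is the sum of all distinct noncommutative monomials with exactly $i_j$ occurrences of $x_j$ for each $j$ ($p_{0,\ldots,0}=1$), and $P_n(x_1,\ldots,x_m)=\operatorname{span}_k\{p_{i_1,\ldots,i_m}(x_1,\ldots,x_m)\mid i_1+\cdots+i_m=n\}$. *)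

(* Defs.v *)
From Stdlib Require List.
From HB Require Import structures.
From mathcomp Require Import all_boot all_order all_algebra.
Set Implicit Arguments. Unset Strict Implicit. Unset Printing Implicit Defensive.
Import GRing.Theory.
Local Open Scope ring_scope.

(* Words (noncommutative monomials) in the letters x_1..x_m, letter j : 'I_m. *)
Definition word (m : nat) := seq 'I_m.

(* Elements of k<x_1..x_m> are represented by their coefficient function
   on monomials (words).  Genuine elements have finite support; all the
   elements considered below do. *)
Definition ncpoly (k : fieldType) (m : nat) := word m -> k.

Section NC.
Variables (k : fieldType) (m : nat).

Definition nc_one : ncpoly k m := fun w => if w is [::] then 1 else 0.

Definition nc_mul (f g : ncpoly k m) : ncpoly k m :=
  fun w => \sum_(i < (size w).+1) f (take i w) * g (drop i w).

Definition nc_exp (f : ncpoly k m) (n : nat) : ncpoly k m :=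
  iter n (nc_mul f) nc_one.

Definition nc_lin (alpha : 'I_m -> k) : ncpoly k m :=
  fun w => if w is [:: j] then alpha j else 0.

Definition pmon (i : 'I_m -> nat) : ncpoly k m :=
  fun w => if [forall j, count_mem j w == i j] then 1 else 0.

Definition in_span (S : ncpoly k m -> Prop) (f : ncpoly k m) : Prop :=
  exists r : seq (ncpoly k m * k),
    (forall x, List.In x r -> S x.1) /\
    f = (fun w => \sum_(x <- r) x.2 * x.1 w).

Definition W_gen (n : nat) (g : ncpoly k m) : Prop :=
  exists alpha : 'I_m -> k, g = nc_exp (nc_lin alpha) n.

Definition P_gen (n : nat) (g : ncpoly k m) : Prop :=
  exists i : 'I_m -> nat, (\sum_(j < m) i j)%N = n /\ g = pmon i.

End NC.

(* Main.v *)
Require Import Defs.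
From mathcomp Require Import all_boot all_order all_algebra.
From Stdlib Require Import FunctionalExtensionality.
Set Implicit Arguments. Unset Strict Implicit. Unset Printing Implicit Defensive.
Import GRing.Theory.
Local Open Scope ring_scope.

Section Aux.
Variables (k : fieldType) (m : nat).
Implicit Types (S T : ncpoly k m -> Prop) (f g : ncpoly k m).

Lemma span0 S : in_span S (fun _ => 0).
Proof. exists [::]; split => //; apply: functional_extensionality => w; by rewrite big_nil. Qed.

Lemma span_gen S g : S g -> in_span S g.
Proof.
move=> Hg; exists [:: (g, 1)]; split; first by move=> x /= [<-|[]].
by apply: functional_extensionality => w; rewrite big_seq1 mul1r.
Qed.

Lemma span_add S f g : in_span S f -> in_span S g -> in_span S (fun w => f w + g w).
Proof.
move=> [r1 [H1 ->]] [r2 [H2 ->]]; exists (r1 ++ r2); split.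
  by move=> x Hx; case: (List.in_app_or _ _ _ Hx) => [/H1|/H2].
by apply: functional_extensionality => w; rewrite big_cat.
Qed.

Lemma span_scale S c f : in_span S f -> in_span S (fun w => c * f w).
Proof.
move=> [r [H ->]]; exists (map (fun x => (x.1, c * x.2)) r); split.
  by move=> x Hx; case: (proj1 (List.in_map_iff _ _ _) Hx) => y [<- /H].
apply: functional_extensionality => w; rewrite big_map big_distrr /=.
by apply: eq_bigr => x _; rewrite mulrA.
Qed.

Lemma span_sum S (I : Type) (r : seq I) (F : I -> ncpoly k m) (c : I -> k) :
  (forall i, List.In i r -> in_span S (F i)) ->
  in_span S (fun w => \sum_(i <- r) c i * F i w).
Proof.
elim: r => [|a r IH] H.
  have -> : (fun w : word m => \sum_(i <- [::]) c i * F i w) = (fun _ => 0).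
    by apply: functional_extensionality => w; rewrite big_nil.
  exact: span0.
have -> : (fun w => \sum_(i <- a :: r) c i * F i w) =
   (fun w => c a * F a w + \sum_(i <- r) c i * F i w).
  by apply: functional_extensionality => w; rewrite big_cons.
apply: span_add; first by apply: span_scale; apply: H; left.
by apply: IH => i Hi; apply: H; right.
Qed.

Lemma span_mono S T f : (forall g, S g -> in_span T g) -> in_span S f -> in_span T f.
Proof.
move=> HST [r [H ->]].
exact: (@span_sum T _ r (fun x => x.1) (fun x => x.2) (fun i Hi => HST _ (H _ Hi))).
Qed.

Lemma mul_lin (a : 'I_m -> k) g w :
  nc_mul (nc_lin a) g w = if w is c :: w' then a c * g w' else 0.
Proof.
rewrite /nc_mul; case: w => [|c w] /=; first by rewrite big_ord1 /= mul0r.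
rewrite big_ord_recl /= mul0r add0r big_ord_recl /= !add0n take0 drop0.
case: w => [|d w] /=; first by rewrite big_ord0 addr0.
by rewrite big1 ?addr0 // => i _; rewrite mul0r.
Qed.

Lemma exp_lin (a : 'I_m -> k) n w :
  nc_exp (nc_lin a) n w = if size w == n then \prod_(c <- w) a c else 0.
Proof.
elim: n w => [|n IH] w; first by case: w => //=; rewrite big_nil.
change (nc_mul (nc_lin a) (nc_exp (nc_lin a) n) w = (if size w == n.+1 then \prod_(c <- w) a c else 0)); rewrite mul_lin.
case: w => [|c w] //=.
rewrite IH eqSS big_cons; case: ifP => _ //; by rewrite mulr0.
Qed.

Lemma prod_count (a : 'I_m -> k) w :
  \prod_(c <- w) a c = \prod_(j < m) a j ^+ count_mem j w.
Proof.
elim: w => [|c w IH].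
  by rewrite big_nil big1 // => j _; rewrite expr0.
rewrite big_cons IH /=.
under [in RHS]eq_bigr => j _ do rewrite exprD.
rewrite big_split /=; congr (_ * _); rewrite (bigD1 c) //= eqxx expr1 big1 ?mulr1 // => j /negPf.
by rewrite eq_sym => ->; rewrite expr0.
Qed.

Lemma sum_count (w : word m) : (\sum_(j < m) count_mem j w)%N = size w.
Proof.
elim: w => [|c w IH]; first by rewrite big1.
rewrite /= big_split /= IH (bigD1 c) //= eqxx big1 // => j /negPf.
by rewrite eq_sym => ->.
Qed.

Lemma In_mem (T0 : eqType) (x : T0) (s : seq T0) : List.In x s -> x \in s.
Proof. elim: s => //= a s IH [->|/IH H]; by rewrite inE ?eqxx ?H ?orbT. Qed.

End Aux.

Section Dir.
Variables (k : fieldType) (m n : nat).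

Lemma W_in_P g : W_gen n g -> in_span (@P_gen k m n) g.
Proof.
move=> [a ->].
pose P (t : {ffun 'I_m -> 'I_n.+1}) := (\sum_(j < m) val (t j) == n)%N.
pose F (t : {ffun 'I_m -> 'I_n.+1}) := pmon k (fun j => val (t j)).
pose c (t : {ffun 'I_m -> 'I_n.+1}) := \prod_(j < m) a j ^+ t j.
have -> : nc_exp (nc_lin a) n =
   (fun w => \sum_(t <- [seq t <- index_enum _ | P t]) c t * F t w).
  apply: functional_extensionality => w; rewrite exp_lin big_filter.
  case: eqP => Hw.
    pose t0 : {ffun 'I_m -> 'I_n.+1} := [ffun j => inord (count_mem j w)].
    have Ht0 : forall j, val (t0 j) = count_mem j w.
      by move=> j; rewrite ffunE; apply: inordK; rewrite ltnS -Hw; exact: count_size.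
    rewrite (bigD1 t0) /=; last first.
      by rewrite /P (eq_bigr _ (fun j _ => Ht0 j)) sum_count Hw.
    rewrite /F /c /pmon.
    have -> : [forall j, count_mem j w == val (t0 j)].
      by apply/forallP => j; rewrite Ht0.
    rewrite mulr1 [X in _ = _ + X]big1 ?addr0; last first.
      move=> t /andP [_ Hne]; case: ifP; rewrite ?mulr0 //.
      move/forallP => H; case/negP: Hne; apply/eqP/ffunP => j.
      by apply: val_inj; rewrite Ht0; apply/eqP; rewrite eq_sym.
    by rewrite prod_count; apply: eq_bigr => j _; rewrite Ht0.
  rewrite big1 // => t Pt; rewrite /F /pmon; case: ifP; rewrite ?mulr0 //.
  move/forallP => H; case: Hw; rewrite -sum_count -(eqP Pt).
  by apply: eq_bigr => j _; apply/eqP.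
apply: (@span_sum _ _ _ _ _ F c) => t /In_mem; rewrite mem_filter => /andP [Pt _].
apply: span_gen.
by exists (fun j => val (t j)); split => //; apply/eqP.
Qed.

Lemma P_in_W (s : seq k) : uniq s -> size s = n.+1 ->
  forall g, P_gen n g -> in_span (@W_gen k m n) g.
Proof.
move=> us ss g [i [Hi ->]].
pose a : 'rV[k]_n.+1 := \row_t nth 0 s t.
pose V := Vandermonde n.+1 a.
pose D := invmx V.
have VD : V *m D = 1%:M.
  apply: mulmxV; rewrite unitmxE unitfE det_Vandermonde.
  apply/prodf_neq0 => u _; apply/prodf_neq0 => v Huv.
  rewrite !mxE subr_eq0; apply/eqP => /eqP; rewrite nth_uniq ?ss //.
  by move=> /eqP /val_inj Heq; move: Huv; rewrite Heq ltnn.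
have ile : forall j, (i j <= n)%N.
  by move=> j; rewrite -Hi (bigD1 j) //= leq_addr.
have key : forall e e' : nat, (e <= n)%N -> (e' <= n)%N ->
    \sum_(u < n.+1) D u (inord e') * a 0 u ^+ e = (e == e')%:R.
  move=> e e' He He'.
  have E : (inord e == inord e' :> 'I_n.+1) = (e == e') by rewrite -val_eqE /= !inordK.
  rewrite -E.
  have := congr1 (fun M : 'M_n.+1 => M (inord e) (inord e')) VD.
  rewrite /= !mxE => <-; apply: eq_bigr => u _.
  by rewrite !mxE inordK ?ltnS // mulrC.
pose F (t : {ffun 'I_m -> 'I_n.+1}) := nc_exp (nc_lin (fun j => a 0 (t j))) n.
pose c (t : {ffun 'I_m -> 'I_n.+1}) := \prod_(j < m) D (t j) (inord (i j)).
have -> : pmon k i = (fun w => \sum_(t <- index_enum _) c t * F t w).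
  apply: functional_extensionality => w; rewrite /F /c.
  under eq_bigr => t _ do rewrite exp_lin.
  case: eqP => Hw.
    under eq_bigr => t _ do rewrite prod_count -big_split /=.
    rewrite -(bigA_distr_bigA (fun j u => D u (inord (i j)) * a 0 u ^+ count_mem j w)) /=.
    have lec : forall j, (count_mem j w <= n)%N by move=> j; rewrite -Hw count_size.
    under eq_bigr => j _ do rewrite (key _ _ (lec j) (ile j)).
    rewrite /pmon; case: (boolP [forall j, _]) => H.
      by rewrite big1 // => j _; rewrite (forallP H).
    move: H; rewrite negb_forall => /existsP [j Hj].
    by rewrite (bigD1 j) //= (negPf Hj) mul0r.
  rewrite big1; last by move=> t _; rewrite mulr0.
  rewrite /pmon; case: ifP => // /forallP H; case: Hw.
  by rewrite -sum_count -Hi; apply: eq_bigr => j _; apply/eqP.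
apply: (@span_sum _ _ _ _ _ F c) => t _.
by apply: span_gen; exists (fun j => a 0 (t j)).
Qed.

End Dir.

Theorem proposition2p4 (k : fieldType) (m n : nat) :
  (exists s : seq k, uniq s /\ size s = n.+1) ->
  forall f : ncpoly k m,
    in_span (@W_gen k m n) f <-> in_span (@P_gen k m n) f.
Proof.
move=> [s [us ss]] f; split; apply: span_mono.
  exact: W_in_P.
exact: P_in_W us ss.
Qed.
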